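(* Let $s\in\mathbb{R}$, $\epsilon\in(0,2\sqrt{2/(e\pi)}]$ and $\Delta\in(0,2]$. There exists a polynomial $p$ of degree at most $$n=\left\lceil\sqrt{8\left\lceil\frac{4}{\Delta^2}\ln(8/\pi\epsilon^2)e^2\right\rceil\ln\!\left(\frac{64\frac{\sqrt2}{\Delta}\ln^{1/2}(8/\pi\epsilon^2)}{3\sqrt\pi\,\epsilon}\right)}+1\right\rceil$$ such that $\max_{x\in[-1,\,s-\Delta/2]\cup[s+\Delta/2,\,1]}|p(x)-\mathrm{sign}(x-s)|\le\epsilon$.
   Context: $\mathrm{sign}(y)=1$ for $y>0$, $0$ for $y=0$, $-1$ for $y<0$. *)

(* Defs.v *)
From Stdlib Require Import Reals Lra List.
Open Scope R_scope.

Definition sign (y : R) : R :=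
  if Rlt_dec y 0 then -1 else if Rgt_dec y 0 then 1 else 0.

(* ceiling: Int_part is the floor, so ceil x = - floor(-x) *)
Definition Zceil (x : R) : Z := (- Int_part (- x))%Z.

(* polynomial given by its coefficient list c_0, c_1, ..., c_d *)
Fixpoint peval (c : list R) (x : R) : R :=
  match c with
  | nil => 0
  | a :: c' => a + x * peval c' x
  end.

Definition L (eps : R) : R := ln (8 / (PI * eps ^ 2)).

Definition deg_bound (eps Delta : R) : nat :=
  Z.to_nat (Zceil (sqrt (8 * IZR (Zceil (4 / Delta ^ 2 * L eps * (exp 1) ^ 2))
      * ln (64 * (sqrt 2 / Delta) * sqrt (L eps) / (3 * sqrt PI * eps))) + 1)).

(* Main.v *)
Require Import Defs.
From Stdlib Require Import Reals Lra Lia List Factorial ZArith.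
Open Scope R_scope.

Definition IsPoly (f : R -> R) (n : nat) : Prop :=
  exists c : list R, (length c <= S n)%nat /\ forall x, peval c x = f x.

Lemma IsPoly_ext f g n : (forall x, f x = g x) -> IsPoly f n -> IsPoly g n.
Proof. intros H [c [Hl Hc]]. exists c; split; auto. intro x; rewrite Hc; auto. Qed.

Lemma IsPoly_mono f n m : (n <= m)%nat -> IsPoly f n -> IsPoly f m.
Proof. intros H [c [Hl Hc]]. exists c; split; auto. lia. Qed.

Lemma IsPoly_const a n : IsPoly (fun _ => a) n.
Proof. exists (a :: nil); split; simpl. lia. intros; ring. Qed.

Lemma IsPoly_id : IsPoly (fun x => x) 1.
Proof. exists (0 :: 1 :: nil); split; simpl. lia. intros; ring. Qed.

Fixpoint padd (c d : list R) : list R :=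
  match c, d with
  | nil, _ => d
  | _, nil => c
  | a :: c', b :: d' => (a + b) :: padd c' d'
  end.

Lemma padd_eval c d x : peval (padd c d) x = peval c x + peval d x.
Proof.
  revert d; induction c as [|a c IH]; intros d; simpl. ring.
  destruct d as [|b d]; simpl. ring. rewrite IH; ring.
Qed.

Lemma padd_len c d n : (length c <= n)%nat -> (length d <= n)%nat -> (length (padd c d) <= n)%nat.
Proof.
  revert d n; induction c as [|a c IH]; intros d n H1 H2; simpl; auto.
  destruct d as [|b d]; simpl in *; auto.
  destruct n; [lia|]. apply le_n_S. apply IH; lia.
Qed.

Lemma IsPoly_add f g n : IsPoly f n -> IsPoly g n -> IsPoly (fun x => f x + g x) n.
Proof.
  intros [c [Hl Hc]] [d [Hl' Hd]]. exists (padd c d); split.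
  apply padd_len; auto. intro x; rewrite padd_eval, Hc, Hd; auto.
Qed.

Lemma IsPoly_scal k f n : IsPoly f n -> IsPoly (fun x => k * f x) n.
Proof.
  intros [c [Hl Hc]]. exists (map (Rmult k) c); split.
  rewrite length_map; auto.
  intro x. rewrite <- Hc. clear. induction c; simpl. ring. rewrite IHc; ring.
Qed.

Lemma IsPoly_mulX f n : IsPoly f n -> IsPoly (fun x => x * f x) (S n).
Proof.
  intros [c [Hl Hc]]. exists (0 :: c); split; simpl. lia. intro x; rewrite Hc; ring.
Qed.

Lemma IsPoly_mul_aux g m : IsPoly g m -> forall c n, (length c <= S n)%nat ->
  IsPoly (fun x => peval c x * g x) (n + m).
Proof.
  intros Hg c; induction c as [|a c IH]; intros n Hl; simpl.
  - eapply IsPoly_ext; [|apply (IsPoly_const 0)]. intros; simpl; ring.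
  - eapply IsPoly_ext with (f := fun x => a * g x + x * (peval c x * g x)).
    intros; ring.
    destruct n as [|n].
    + destruct c; simpl in Hl; [|lia].
      eapply IsPoly_ext; [|apply IsPoly_scal with (k:=a); exact Hg]. intros; simpl; ring.
    + apply IsPoly_add. apply IsPoly_mono with m. lia. apply IsPoly_scal; auto.
      simpl. apply IsPoly_mulX. apply IH. simpl in Hl; lia.
Qed.

Lemma IsPoly_mul f g n m : IsPoly f n -> IsPoly g m -> IsPoly (fun x => f x * g x) (n + m).
Proof.
  intros [c [Hl Hc]] Hg. eapply IsPoly_ext; [|apply (IsPoly_mul_aux g m Hg c n Hl)].
  intros; cbv beta; rewrite Hc; auto.
Qed.

Lemma IsPoly_comp_aux g m : IsPoly g m -> forall c n, (length c <= S n)%nat ->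
  IsPoly (fun x => peval c (g x)) (n * m).
Proof.
  intros Hg c; induction c as [|a c IH]; intros n Hl; simpl.
  - apply IsPoly_const.
  - destruct n as [|n].
    + destruct c; simpl in Hl; [|lia]. simpl.
      eapply IsPoly_ext; [|apply (IsPoly_const a)]. intros; simpl; ring.
    + apply IsPoly_add. apply IsPoly_mono with 0%nat. lia. apply IsPoly_const.
      simpl. apply IsPoly_mul; auto. apply IH. simpl in Hl; lia.
Qed.

Lemma IsPoly_comp f g n m : IsPoly f n -> IsPoly g m -> IsPoly (fun x => f (g x)) (n * m).
Proof.
  intros [c [Hl Hc]] Hg. eapply IsPoly_ext; [|apply (IsPoly_comp_aux g m Hg c n Hl)].
  intros; cbv beta; rewrite Hc; auto.
Qed.

Lemma dpl_ext f g x l : (forall y, f y = g y) -> derivable_pt_lim f x l -> derivable_pt_lim g x l.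
Proof.
  intros E H eps He. destruct (H eps He) as [d Hd]. exists d. intros h Hh Hhd.
  rewrite <- !E. apply Hd; auto.
Qed.

Fixpoint prim (k : nat) (c : list R) : list R :=
  match c with nil => nil | a :: c' => a / INR (S k) :: prim (S k) c' end.

Lemma prim_len k c : length (prim k c) = length c.
Proof. revert k; induction c; intros; simpl; auto. Qed.

Lemma prim_deriv c : forall k x,
  derivable_pt_lim (fun y => y ^ (S k) * peval (prim k c) y) x (x ^ k * peval c x).
Proof.
  induction c as [|a c IH]; intros k x; cbn [peval prim].
  - eapply dpl_ext with (f := fun _ => 0). intros; ring.
    replace (x ^ k * 0) with 0 by ring. apply derivable_pt_lim_const.
  - eapply dpl_ext with (f := fun y => (a / INR (S k)) * y ^ (S k) + y ^ (S (S k)) * peval (prim (S k) c) y).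
    intros y; simpl; ring.
    replace (x ^ k * (a + x * peval c x)) with
      ((a / INR (S k)) * (INR (S k) * x ^ Init.Nat.pred (S k)) + x ^ S k * peval c x).
    2:{ rewrite S_INR. cbn [pred pow]. field. pose proof (pos_INR k); lra. }
    apply (derivable_pt_lim_plus (fun y => (a / INR (S k)) * y ^ (S k))).
    apply derivable_pt_lim_scal. apply derivable_pt_lim_pow.
    apply IH.
Qed.

Lemma IsPoly_prim f n : IsPoly f n -> exists F, IsPoly F (S n) /\ F 0 = 0 /\
  forall x, derivable_pt_lim F x (f x).
Proof.
  intros [c [Hl Hc]]. exists (peval (0 :: prim 0 c)). split; [|split].
  - exists (0 :: prim 0 c); split; auto. simpl; rewrite prim_len; lia.
  - simpl; ring.
  - intro x. rewrite <- Hc. replace (peval c x) with (x ^ 0 * peval c x) by (simpl; ring).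
    eapply dpl_ext; [|apply (prim_deriv c 0 x)].
    intro y; simpl; ring.
Qed.

Lemma deriv_bound F f a b M : a <= b ->
  (forall y, a <= y <= b -> derivable_pt_lim F y (f y)) ->
  (forall y, a <= y <= b -> Rabs (f y) <= M) -> Rabs (F b - F a) <= M * (b - a).
Proof.
  intros Hab HD HM. destruct (Req_dec a b) as [E|NE].
  - subst. replace (F b - F b) with 0 by ring. rewrite Rabs_R0. replace (b-b) with 0 by ring. lra.
  - destruct (MVT_cor2 F f a b) as [c [Hc1 Hc2]]; [lra|auto|].
    rewrite Hc1, Rabs_mult. rewrite (Rabs_right (b - a)) by lra.
    apply Rmult_le_compat_r; [lra|]. apply HM; lra.
Qed.

Lemma deriv_mono F f a b : a <= b ->
  (forall y, a <= y <= b -> derivable_pt_lim F y (f y)) ->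
  (forall y, a <= y <= b -> 0 <= f y) -> F a <= F b.
Proof.
  intros Hab HD HM. destruct (Req_dec a b) as [E|NE].
  - subst; lra.
  - destruct (MVT_cor2 F f a b) as [c [Hc1 Hc2]]; [lra|auto|].
    assert (0 <= f c * (b - a)) by (apply Rmult_le_pos; [apply HM; lra|lra]). lra.
Qed.

Lemma deriv_zero F a b : a <= b ->
  (forall y, a <= y <= b -> derivable_pt_lim F y 0) -> F a = F b.
Proof.
  intros Hab HD. destruct (Req_dec a b) as [E|NE].
  - subst; auto.
  - destruct (MVT_cor2 F (fun _ => 0) a b) as [c [Hc1 Hc2]]; [lra|auto|]. lra.
Qed.

Lemma dpl_eq f g x l l' : (forall y, f y = g y) -> l = l' ->
  derivable_pt_lim f x l -> derivable_pt_lim g x l'.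
Proof. intros E El H. subst l'. eapply dpl_ext; eauto. Qed.

Fixpoint tsum (x : R) (n : nat) : R :=
  match n with 0 => 1 | S m => tsum x m + x ^ n / INR (fact n) end.

Lemma tsum_deriv n x : derivable_pt_lim (fun y => tsum y (S n)) x (tsum x n).
Proof.
  induction n as [|n IH].
  - assert (H := derivable_pt_lim_plus (fun _ => 1) (fun y => y) x 0 1
      (derivable_pt_lim_const 1 x) (derivable_pt_lim_id x)).
    eapply dpl_eq; [| |exact H]. intros; unfold plus_fct; simpl; field. simpl; ring.
  - change (tsum x (S n)) with (tsum x n + x ^ (S n) / INR (fact (S n))).
    eapply dpl_ext with (f := fun y => tsum y (S n) + / INR (fact (S (S n))) * y ^ (S (S n))).
    intros y; change (tsum y (S (S n))) with (tsum y (S n) + y ^ (S (S n)) / INR (fact (S (S n)))). unfold Rdiv. ring.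
    apply derivable_pt_lim_plus. exact IH.
    replace (x ^ S n / INR (fact (S n))) with (/ INR (fact (S (S n))) * (INR (S (S n)) * x ^ pred (S (S n)))).
    apply derivable_pt_lim_scal. apply derivable_pt_lim_pow.
    simpl pred. rewrite (fact_simpl (S n)). rewrite mult_INR. field.
    split; apply not_0_INR; [apply fact_neq_0|lia].
Qed.

Lemma tsum_le_exp n x : 0 <= x -> tsum x n <= exp x.
Proof.
  revert x; induction n as [|n IH]; intros x Hx.
  - simpl. pose proof (exp_ineq1_le x). lra.
  - assert (H : (fun y => exp y - tsum y (S n)) 0 <= (fun y => exp y - tsum y (S n)) x).
    { apply (deriv_mono (fun y => exp y - tsum y (S n)) (fun y => exp y - tsum y n) 0 x); auto.
      intros y Hy. apply derivable_pt_lim_minus. apply derivable_pt_lim_exp. apply tsum_deriv.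
      intros y Hy. specialize (IH y ltac:(lra)). lra. }
    cbv beta in H. cut (tsum 0 (S n) = 1). intro E.
    + rewrite exp_0, E in H. lra.
    + clear. induction n. simpl. field.
      change (tsum 0 (S (S n))) with (tsum 0 (S n) + 0 ^ (S (S n)) / INR (fact (S (S n)))).
      rewrite IHn. simpl. unfold Rdiv. ring.
Qed.

Lemma exp_upper x : x < 1 -> exp x <= / (1 - x).
Proof.
  intro H. pose proof (exp_ineq1_le (-x)). rewrite <- (Rinv_inv (exp x)).
  apply Rinv_le_contravar. lra. rewrite <- exp_Ropp. lra.
Qed.

Lemma exp_pow x n : exp (INR n * x) = exp x ^ n.
Proof.
  induction n. simpl. rewrite Rmult_0_l, exp_0; auto.
  rewrite S_INR, Rmult_plus_distr_r, Rmult_1_l, exp_plus, IHn. simpl; ring.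
Qed.

Fixpoint Tch (n : nat) (x : R) : R :=
  match n with
  | O => 1
  | S m => match m with O => x | S k => 2 * x * Tch m x - Tch k x end
  end.

Lemma Tch_SS k x : Tch (S (S k)) x = 2 * x * Tch (S k) x - Tch k x.
Proof. reflexivity. Qed.

Lemma IsPoly_Tch n : IsPoly (Tch n) n.
Proof.
  assert (H : forall n, IsPoly (Tch n) n /\ IsPoly (Tch (S n)) (S n)).
  { clear n; intro n; induction n as [|n [IH1 IH2]].
    - split. apply IsPoly_const. eapply IsPoly_ext; [|apply IsPoly_id]. reflexivity.
    - split; auto.
      eapply IsPoly_ext with (f := fun x => 2 * (x * Tch (S n) x) + (-1) * Tch n x).
      intros; rewrite Tch_SS; ring.
      apply IsPoly_add. apply IsPoly_scal, IsPoly_mulX; auto.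
      apply IsPoly_scal. apply IsPoly_mono with n; auto. }
  apply H.
Qed.

Lemma Tch_cos n t : Tch n (cos t) = cos (INR n * t).
Proof.
  assert (H : forall n, Tch n (cos t) = cos (INR n * t) /\ Tch (S n) (cos t) = cos (INR (S n) * t)).
  { clear n; intro n; induction n as [|n [IH1 IH2]].
    - simpl. rewrite Rmult_0_l, cos_0, Rmult_1_l. auto.
    - split; auto. rewrite Tch_SS, IH1, IH2.
      rewrite !S_INR.
      replace ((INR n + 1 + 1) * t) with ((INR n + 1) * t + t) by ring.
      replace (INR n * t) with ((INR n + 1) * t - t) by ring.
      rewrite cos_plus, cos_minus. ring. }
  apply H.
Qed.

Lemma Tch_bound n u : -1 <= u <= 1 -> Rabs (Tch n u) <= 1.
Proof.
  intro Hu. rewrite <- (cos_acos u Hu), Tch_cos. apply Rabs_le, COS_bound.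
Qed.

Lemma Tch_hyp n r : 0 < r -> Tch n ((r + / r) / 2) = (r ^ n + / r ^ n) / 2.
Proof.
  intro Hr.
  assert (H : forall n, Tch n ((r + / r) / 2) = (r ^ n + / r ^ n) / 2 /\
                        Tch (S n) ((r + / r) / 2) = (r ^ (S n) + / r ^ (S n)) / 2).
  { clear n; intro n; induction n as [|n [IH1 IH2]].
    - simpl. split; field; lra.
    - split; auto. rewrite Tch_SS, IH1, IH2. simpl.
      assert (0 < r ^ n) by (apply pow_lt; auto). field. lra. }
  apply H.
Qed.

Definition uu (gm z : R) : R := (1 + gm * gm - 2 * (z * z)) / (1 - gm * gm).
Definition Nk (d : nat) (gm z : R) : R := Tch d (uu gm z).
Definition Pk (d : nat) (gm : R) : R := Tch d (uu gm 0).
Definition rho0 (gm : R) : R := (1 + gm) / (1 - gm).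

Lemma IsPoly_Nk d gm : IsPoly (Nk d gm) (2 * d).
Proof.
  unfold Nk. replace (2 * d)%nat with (d * 2)%nat by lia.
  apply IsPoly_comp. apply IsPoly_Tch.
  unfold uu. eapply IsPoly_ext with
    (f := fun z => (1 + gm * gm) / (1 - gm * gm) + (-2 / (1 - gm * gm)) * (z * (z * 1))).
  intros; unfold Rdiv; ring.
  apply IsPoly_add. apply IsPoly_const. apply IsPoly_scal. apply IsPoly_mulX.
  apply IsPoly_mulX. apply IsPoly_const.
Qed.

Lemma Nk_even d gm z : Nk d gm (- z) = Nk d gm z.
Proof. unfold Nk, uu. f_equal. f_equal. ring. Qed.

Lemma uu_tail gm z : 0 < gm < 1 -> gm * gm <= z * z <= 1 -> -1 <= uu gm z <= 1.
Proof.
  intros Hg Hz. unfold uu. assert (0 < 1 - gm * gm) by nra.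
  split; [apply Rmult_le_reg_r with (1 - gm*gm); auto; unfold Rdiv; rewrite Rmult_assoc, Rinv_l; lra
         |apply Rmult_le_reg_r with (1 - gm*gm); auto; unfold Rdiv; rewrite Rmult_assoc, Rinv_l; lra].
Qed.

Lemma Nk_tail d gm z : 0 < gm < 1 -> gm * gm <= z * z <= 1 -> Rabs (Nk d gm z) <= 1.
Proof. intros; apply Tch_bound, uu_tail; auto. Qed.

Lemma rho0_pos gm : 0 <= gm < 1 -> 1 <= rho0 gm.
Proof. intros. unfold rho0. apply Rmult_le_reg_r with (1 - gm). lra. unfold Rdiv; rewrite Rmult_assoc, Rinv_l; lra. Qed.

Lemma Pk_eq d gm : 0 <= gm < 1 -> Pk d gm = (rho0 gm ^ d + / rho0 gm ^ d) / 2.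
Proof.
  intros Hg. unfold Pk. rewrite <- Tch_hyp. f_equal. unfold uu, rho0. field. split; nra.
  pose proof (rho0_pos gm Hg); lra.
Qed.

Lemma xinv_mono A B : 1 <= A <= B -> A + / A <= B + / B.
Proof.
  intros H.
  assert (E : B + / B - (A + / A) = (B - A) * (A * B - 1) * / (A * B)) by (field; lra).
  assert (0 <= (B - A) * (A * B - 1) * / (A * B)).
  { apply Rmult_le_pos; [apply Rmult_le_pos; nra | left; apply Rinv_0_lt_compat; nra]. }
  lra.
Qed.

Lemma xinv_ratio A B : 0 < A <= B -> A / B <= (A + / A) / (B + / B).
Proof.
  intros H.
  assert (E : (A + / A) / (B + / B) - A / B = (B * B - A * A) * / (A * B * (B * B + 1))).
  { assert (0 < / B) by (apply Rinv_0_lt_compat; lra).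
    assert (0 < / A) by (apply Rinv_0_lt_compat; lra).
    field. repeat split; try nra. }
  assert (0 <= (B * B - A * A) * / (A * B * (B * B + 1))).
  { apply Rmult_le_pos; [nra | left; apply Rinv_0_lt_compat; apply Rmult_lt_0_compat; nra]. }
  lra.
Qed.

Lemma exp_le_exp x y : x <= y -> exp x <= exp y.
Proof. intros [H|H]. left; apply exp_increasing; auto. subst; lra. Qed.

Lemma dl_exp_neg x : derivable_pt_lim (fun y => exp (- y)) x (- exp (- x)).
Proof.
  assert (H1 : derivable_pt_lim (fun y => - y) x (-1)).
  { eapply dpl_eq; [| |apply derivable_pt_lim_opp, derivable_pt_lim_id].
    intros; unfold opp_fct; auto. auto. }
  assert (H := derivable_pt_lim_comp (fun y => - y) exp x (-1) (exp (- x)) H1 (derivable_pt_lim_exp _)).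
  eapply dpl_eq; [| |exact H]. intros; unfold comp; auto. ring.
Qed.

Lemma dl_mul f g x lf lg : derivable_pt_lim f x lf -> derivable_pt_lim g x lg ->
  derivable_pt_lim (fun y => f y * g y) x (lf * g x + f x * lg).
Proof. intros. apply (dpl_eq (mult_fct f g) _ x (lf * g x + f x * lg)); auto. apply derivable_pt_lim_mult; auto. Qed.
Lemma dl_plus f g x lf lg : derivable_pt_lim f x lf -> derivable_pt_lim g x lg ->
  derivable_pt_lim (fun y => f y + g y) x (lf + lg).
Proof. intros. apply (dpl_eq (plus_fct f g) _ x (lf + lg)); auto. apply derivable_pt_lim_plus; auto. Qed.
Lemma dl_minus f g x lf lg : derivable_pt_lim f x lf -> derivable_pt_lim g x lg ->
  derivable_pt_lim (fun y => f y - g y) x (lf - lg).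
Proof. intros. apply (dpl_eq (minus_fct f g) _ x (lf - lg)); auto. apply derivable_pt_lim_minus; auto. Qed.
Lemma dl_const a x : derivable_pt_lim (fun _ => a) x 0.
Proof. apply derivable_pt_lim_const. Qed.
Lemma dl_id x : derivable_pt_lim (fun y => y) x 1.
Proof. apply derivable_pt_lim_id. Qed.
Lemma dl_scal a f x l : derivable_pt_lim f x l -> derivable_pt_lim (fun y => a * f y) x (a * l).
Proof. intros. apply (dpl_eq (mult_real_fct a f) _ x (a * l)); auto. apply derivable_pt_lim_scal; auto. Qed.

Lemma exp2_le_rho0 g : 0 <= g < 1 -> exp (2 * g) <= rho0 g.
Proof.
  intros Hg.
  pose proof (deriv_mono (fun y => (1 + y) * exp (- y) - (1 - y) * exp y)
     (fun y => y * (exp y - exp (- y))) 0 g) as H.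
  specialize (H ltac:(lra)).
  assert (HD : forall y, 0 <= y <= g -> derivable_pt_lim (fun y => (1 + y) * exp (- y) - (1 - y) * exp y) y (y * (exp y - exp (- y)))).
  { intros y Hy. eapply dpl_eq; [intros; reflexivity| |].
      2:{ apply dl_minus; apply dl_mul.
          apply dl_plus; [apply dl_const|apply dl_id]. apply dl_exp_neg.
          apply dl_minus; [apply dl_const|apply dl_id]. apply derivable_pt_lim_exp. }
      cbv beta; ring. }
  specialize (H HD).
  assert (HP : forall y, 0 <= y <= g -> 0 <= y * (exp y - exp (- y))).
  { intros y Hy. apply Rmult_le_pos. lra.
      assert (exp (- y) <= exp y) by (apply exp_le_exp; lra). lra. }
  specialize (H HP).
  cbv beta in H. rewrite Ropp_0, exp_0 in H.
  unfold rho0. replace (2 * g) with (g + g) by ring. rewrite exp_plus.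
  assert (E : exp (- g) * exp g = 1) by (rewrite <- exp_plus; replace (-g + g) with 0 by ring; apply exp_0).
  assert (0 < exp g) by apply exp_pos.
  assert (Hk : exp g * exp g * (1 - g) <= 1 + g).
  { replace (1 + g) with ((1 + g) * (exp (- g) * exp g)) by (rewrite E; ring).
    replace (exp g * exp g * (1 - g)) with ((1 - g) * exp g * exp g) by ring.
    replace ((1 + g) * (exp (- g) * exp g)) with ((1 + g) * exp (- g) * exp g) by ring.
    apply Rmult_le_compat_r; lra. }
  assert (0 < / (1 - g)) by (apply Rinv_0_lt_compat; lra).
  unfold Rdiv. replace (exp g * exp g) with (exp g * exp g * (1 - g) * / (1 - g)) by (field; lra).
  apply Rmult_le_compat_r; lra.
Qed.

Lemma Pk_pos_lower d g : 0 <= g < 1 -> exp (2 * g * INR d) / 2 <= Pk d g /\ 0 < Pk d g.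
Proof.
  intros Hg. rewrite Pk_eq by auto. pose proof (rho0_pos g Hg).
  assert (1 <= rho0 g ^ d) by (apply pow_R1_Rle; lra).
  assert (0 < / rho0 g ^ d) by (apply Rinv_0_lt_compat; lra).
  split; [|lra].
  replace (2 * g * INR d) with (INR d * (2 * g)) by ring. rewrite exp_pow.
  assert (exp (2 * g) ^ d <= rho0 g ^ d) by (apply pow_incr; split; [left; apply exp_pos|apply exp2_le_rho0; auto]).
  lra.
Qed.

Lemma bernoulli t n : 0 <= t <= 1 -> 1 - INR n * t <= (1 - t) ^ n.
Proof.
  intros Ht. induction n. simpl; lra.
  rewrite S_INR. simpl. assert (0 <= (1 - t) * ((1 - t) ^ n - (1 - INR n * t))) by (apply Rmult_le_pos; lra).
  assert (0 <= INR n * (t * t)) by (apply Rmult_le_pos; [apply pos_INR|nra]).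
  nra.
Qed.

Section Scale.
Variables (gm z : R).
Hypothesis Hg : 0 < gm < 1.
Hypothesis Hz : z * z <= gm * gm.

Let a := sqrt (gm * gm - z * z).
Let b := sqrt (1 - z * z).
Let r := (a + b) ^ 2 / (1 - gm * gm).

Lemma sc_facts : a * a = gm * gm - z * z /\ b * b = 1 - z * z /\ 0 <= a <= gm /\ a < b <= 1.
Proof.
  assert (Ha : a * a = gm * gm - z * z) by (apply sqrt_sqrt; lra).
  assert (Hb : b * b = 1 - z * z) by (apply sqrt_sqrt; nra).
  assert (0 <= a) by apply sqrt_pos. assert (0 <= b) by apply sqrt_pos.
  repeat split; auto; nra.
Qed.

Lemma sc_repr : uu gm z = (r + / r) / 2 /\ 1 <= r <= rho0 gm.
Proof.
  destruct sc_facts as [Ha [Hb [Ha1 Hb1]]].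
  assert (Hd : 0 < 1 - gm * gm) by nra.
  assert (Hr : r = (a + b) ^ 2 / ((b - a) * (b + a))).
  { unfold r. f_equal. nra. }
  assert (0 < b - a) by lra.
  split; [|split].
  - rewrite Hr. unfold uu.
    replace (1 - gm * gm) with ((b - a) * (b + a)) by nra.
    replace (1 + gm * gm - 2 * (z * z)) with (a * a + b * b) by nra.
    field. split; nra.
  - rewrite Hr. apply Rmult_le_reg_r with ((b - a) * (b + a)). nra.
    unfold Rdiv. rewrite Rmult_assoc, Rinv_l by nra. nra.
  - unfold r, rho0. apply Rmult_le_reg_r with (1 - gm * gm). nra.
    unfold Rdiv. rewrite Rmult_assoc, Rinv_l by nra.
    replace ((1 + gm) * / (1 - gm) * (1 - gm * gm)) with ((1 + gm) * (1 + gm)) by (field; lra).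
    nra.
Qed.

Lemma Nk_center d : 0 <= Nk d gm z <= Pk d gm.
Proof.
  destruct sc_repr as [E [H1 H2]]. unfold Nk. rewrite E, Tch_hyp by lra.
  rewrite Pk_eq by lra.
  assert (1 <= r ^ d) by (apply pow_R1_Rle; lra).
  assert (0 < / r ^ d) by (apply Rinv_0_lt_compat; lra).
  split. lra.
  assert (r ^ d <= rho0 gm ^ d) by (apply pow_incr; lra).
  pose proof (xinv_mono (r ^ d) (rho0 gm ^ d) ltac:(lra)). lra.
Qed.

Lemma sqrt_lb_aux p q c : 0 <= c <= q -> q * q <= p + 2 * q * c - c * c  ->
  0 <= p -> q - c <= sqrt p.
Proof.
  intros. rewrite <- (sqrt_square (q - c)) by lra. apply sqrt_le_1_alt. nra.
Qed.

Lemma Nk_ratio d : z * z <= 3 / 4 * (gm * gm) ->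
  1 - 4 / 3 * INR d * (z * z) / gm <= Nk d gm z / Pk d gm.
Proof.
  intros Hz3.
  destruct sc_facts as [Ha [Hb [Ha1 Hb1]]].
  destruct sc_repr as [E [H1 H2]].
  destruct (Pk_pos_lower d gm ltac:(lra)) as [_ HP].
  assert (Hs : 0 <= 2 / 3 * (z * z) / gm <= 1 / 2).
  { split. unfold Rdiv. apply Rmult_le_pos. nra. left; apply Rinv_0_lt_compat; lra.
    apply Rmult_le_reg_r with gm. lra. unfold Rdiv. rewrite Rmult_assoc, Rinv_l by lra. nra. }
  assert (Hal : gm - 2 / 3 * (z * z) / gm <= a).
  { unfold a. apply sqrt_lb_aux. split. lra.
    apply Rmult_le_reg_r with gm. lra. unfold Rdiv. rewrite Rmult_assoc, Rinv_l by lra. nra.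
    replace (2 * gm * (2 / 3 * (z * z) / gm)) with (4 / 3 * (z * z)) by (field; lra).
    assert (2 / 3 * (z * z) / gm * (2 / 3 * (z * z) / gm) <= 1/3 * (z * z)).
    { replace (2 / 3 * (z * z) / gm * (2 / 3 * (z * z) / gm)) with (4 / 9 * (z * z) * (z * z / (gm * gm))) by (field; lra).
      assert (z * z / (gm * gm) <= 3 / 4).
      { apply Rmult_le_reg_r with (gm * gm). nra. unfold Rdiv. rewrite Rmult_assoc, Rinv_l by nra. nra. }
      assert (0 <= z * z) by nra. nra. }
    nra. nra. }
  assert (Hbl : 1 - 2 / 3 * (z * z) <= b).
  { assert (0 <= z * z) by nra. assert (z * z <= 3 / 4) by nra.
    unfold b. apply sqrt_lb_aux. split; nra. nra. nra. }
  set (q := (a + b) / (1 + gm)).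
  assert (Hq : 1 - 2 / 3 * (z * z) / gm <= q).
  { unfold q. replace (1 - 2 / 3 * (z * z) / gm) with (((gm - 2 / 3 * (z * z) / gm) + (1 - 2/3 * (z * z))) / (1 + gm)) by (field; lra).
    unfold Rdiv. apply Rmult_le_compat_r. left; apply Rinv_0_lt_compat; lra. lra. }
  assert (Hrq : r / rho0 gm = q ^ 2).
  { unfold r, rho0, q. field. split; nra. }
  unfold Nk. rewrite E, Tch_hyp by lra. rewrite Pk_eq by lra.
  assert (1 <= r ^ d) by (apply pow_R1_Rle; lra).
  assert (r ^ d <= rho0 gm ^ d) by (apply pow_incr; lra).
  pose proof (xinv_ratio (r ^ d) (rho0 gm ^ d) ltac:(lra)) as HR.
  assert (E2 : (r ^ d + / r ^ d) / 2 / ((rho0 gm ^ d + / rho0 gm ^ d) / 2) =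
              (r ^ d + / r ^ d) / (rho0 gm ^ d + / rho0 gm ^ d)).
  { pose proof (rho0_pos gm ltac:(lra)). assert (1 <= rho0 gm ^ d) by (apply pow_R1_Rle; lra).
    assert (0 < / rho0 gm ^ d) by (apply Rinv_0_lt_compat; lra). field. repeat split; try lra; nra. }
  rewrite E2. eapply Rle_trans; [|exact HR].
  assert (E3 : r ^ d / rho0 gm ^ d = q ^ (2 * d)).
  { rewrite pow_mult, <- Hrq. unfold Rdiv. rewrite Rpow_mult_distr, pow_inv. auto. }
  rewrite E3.
  assert (0 <= 1 - 2 / 3 * (z * z) / gm) by lra.
  assert ((1 - 2 / 3 * (z * z) / gm) ^ (2 * d) <= q ^ (2 * d)) by (apply pow_incr; lra).
  pose proof (bernoulli (2 / 3 * (z * z) / gm) (2 * d) ltac:(lra)).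
  rewrite mult_INR in H5. simpl (INR 2) in H5.
  replace (4 / 3 * INR d * (z * z) / gm) with (2 * INR d * (2 / 3 * (z * z) / gm)) by (field; lra).
  lra.
Qed.
End Scale.

Section Kernel.
Variables (g h : R) (d0 d1 : nat).
Hypothesis Hgh : 0 < g < h /\ h < 1.

Definition P0 := Pk d0 g.
Definition P1 := Pk d1 h.
Definition Kf (z : R) : R := Nk d0 g z * Nk d1 h z / (P0 * P1).
Definition alpha := 4 / 3 * (INR d0 / g + INR d1 / h).

Lemma P0_pos : 0 < P0. Proof. apply (Pk_pos_lower d0 g). lra. Qed.
Lemma P1_pos : 0 < P1. Proof. apply (Pk_pos_lower d1 h). lra. Qed.

Lemma IsPoly_Kf : IsPoly Kf (2 * d0 + 2 * d1).
Proof.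
  unfold Kf. eapply IsPoly_ext with (f := fun z => / (P0 * P1) * (Nk d0 g z * Nk d1 h z)).
  intros; unfold Rdiv; ring.
  apply IsPoly_scal. apply IsPoly_mul; apply IsPoly_Nk.
Qed.

Lemma Kf_even z : Kf (- z) = Kf z.
Proof. unfold Kf. rewrite !Nk_even. auto. Qed.

Lemma Kf_mid z : g * g <= z * z <= h * h -> Rabs (Kf z) <= / P0.
Proof.
  intros Hz. pose proof P0_pos; pose proof P1_pos.
  assert (A := Nk_tail d0 g z ltac:(lra) ltac:(nra)).
  assert (B := Nk_center h z ltac:(lra) ltac:(lra) d1).
  unfold Kf. unfold Rdiv. rewrite Rinv_mult, !Rabs_mult.
  rewrite (Rabs_right (Nk d1 h z)) by lra.
  rewrite (Rabs_right (/ P0)) by (left; apply Rinv_0_lt_compat; lra).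
  rewrite (Rabs_right (/ P1)) by (left; apply Rinv_0_lt_compat; lra).
  fold P1 in B.
  assert (Nk d1 h z * / P1 <= 1).
  { apply Rmult_le_reg_r with P1; auto. rewrite Rmult_assoc, Rinv_l; lra. }
  assert (0 <= Nk d1 h z * / P1) by (apply Rmult_le_pos; [lra|left; apply Rinv_0_lt_compat; lra]).
  assert (0 < / P0) by (apply Rinv_0_lt_compat; lra).
  assert (0 <= Rabs (Nk d0 g z)) by apply Rabs_pos.
  replace (Rabs (Nk d0 g z) * Nk d1 h z * (/ P0 * / P1)) with
    (Rabs (Nk d0 g z) * (Nk d1 h z * / P1) * / P0) by ring.
  assert (Rabs (Nk d0 g z) * (Nk d1 h z * / P1) <= 1) by (replace 1 with (1 * 1) by ring; apply Rmult_le_compat; lra).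
  nra.
Qed.

Lemma Kf_far z : h * h <= z * z <= 1 -> Rabs (Kf z) <= / (P0 * P1).
Proof.
  intros Hz. pose proof P0_pos; pose proof P1_pos.
  assert (A := Nk_tail d0 g z ltac:(lra) ltac:(nra)).
  assert (B := Nk_tail d1 h z ltac:(lra) ltac:(nra)).
  unfold Kf. unfold Rdiv. rewrite !Rabs_mult.
  assert (0 < / (P0 * P1)) by (apply Rinv_0_lt_compat; nra).
  rewrite (Rabs_right (/ (P0 * P1))) by lra.
  assert (0 <= Rabs (Nk d0 g z)) by apply Rabs_pos.
  assert (0 <= Rabs (Nk d1 h z)) by apply Rabs_pos.
  assert (Rabs (Nk d0 g z) * Rabs (Nk d1 h z) <= 1) by (replace 1 with (1*1) by ring; apply Rmult_le_compat; lra).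
  nra.
Qed.

Lemma Kf_nonneg z : z * z <= g * g -> 0 <= Kf z.
Proof.
  intros Hz. pose proof P0_pos; pose proof P1_pos.
  assert (A := Nk_center g z ltac:(lra) Hz d0).
  assert (B := Nk_center h z ltac:(lra) ltac:(nra) d1).
  unfold Kf. unfold Rdiv. apply Rmult_le_pos. apply Rmult_le_pos; lra.
  left; apply Rinv_0_lt_compat; nra.
Qed.

Lemma Kf_center z : z * z <= 3 / 4 * (g * g) -> 1 - alpha * (z * z) <= Kf z.
Proof.
  intros Hz. pose proof P0_pos; pose proof P1_pos.
  assert (A := Nk_ratio g z ltac:(lra) ltac:(nra) d0 Hz).
  assert (B := Nk_ratio h z ltac:(lra) ltac:(nra) d1 ltac:(nra)).
  assert (A2 := Nk_center g z ltac:(lra) ltac:(nra) d0).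
  assert (B2 := Nk_center h z ltac:(lra) ltac:(nra) d1).
  fold P0 in A, A2. fold P1 in B, B2.
  set (x := Nk d0 g z / P0) in *. set (y := Nk d1 h z / P1) in *.
  assert (0 <= x <= 1).
  { unfold x. split. unfold Rdiv; apply Rmult_le_pos; [lra|left; apply Rinv_0_lt_compat; lra].
    apply Rmult_le_reg_r with P0; auto. unfold Rdiv; rewrite Rmult_assoc, Rinv_l; lra. }
  assert (0 <= y <= 1).
  { unfold y. split. unfold Rdiv; apply Rmult_le_pos; [lra|left; apply Rinv_0_lt_compat; lra].
    apply Rmult_le_reg_r with P1; auto. unfold Rdiv; rewrite Rmult_assoc, Rinv_l; lra. }
  assert (E : Kf z = x * y) by (unfold Kf, x, y; field; lra).
  rewrite E.
  assert (E2 : alpha * (z * z) = 4 / 3 * INR d0 * (z * z) / g + 4 / 3 * INR d1 * (z * z) / h)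
    by (unfold alpha; field; lra).
  rewrite E2.
  assert (0 <= (1 - x) * (1 - y)) by (apply Rmult_le_pos; lra).
  lra.
Qed.

End Kernel.

Section Err.
Variables (g h : R) (d0 d1 : nat).
Hypothesis Hgh : 0 < g < h /\ h < 1.
Variable F : R -> R.
Hypothesis HF0 : F 0 = 0.
Hypothesis HFd : forall x, derivable_pt_lim F x (Kf g h d0 d1 x).

Let K := Kf g h d0 d1.
Let p0 := P0 g d0.
Let p1 := P1 h d1.

Lemma F_odd z : 0 <= z -> F (- z) = - F z.
Proof.
  intros Hz.
  assert (Hd : forall y, derivable_pt_lim (fun y => F (- y)) y (- K y)).
  { intros y.
    assert (H1 : derivable_pt_lim (fun y => - y) y (-1)).
    { eapply dpl_eq; [| |apply derivable_pt_lim_opp, derivable_pt_lim_id].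
      intros; unfold opp_fct; auto. auto. }
    assert (H := derivable_pt_lim_comp (fun y => - y) F y (-1) _ H1 (HFd (- y))).
    eapply dpl_eq; [| |exact H]. intros; unfold comp; auto.
    fold K. unfold K. rewrite Kf_even. ring. }
  assert (E := deriv_zero (fun y => F y + F (- y)) 0 z Hz).
  cbv beta in E. rewrite Ropp_0, HF0 in E.
  assert (F z + F (- z) = 0).
  { rewrite <- E. ring. intros y Hy. eapply dpl_eq; [intros; reflexivity| |].
    2: { apply dl_plus. apply HFd. apply Hd. } fold K. ring. }
  lra.
Qed.

Lemma main_err (eps w : R) : 0 < eps -> 0 < w -> w * w <= 3 / 4 * (g * g) ->
  alpha g h d0 d1 * (w * w) <= 1 ->
  ((h - g) / p0 + (1 - h) / (p0 * p1)) * (1 + eps) <= eps * (w - alpha g h d0 d1 * (w * w * w) / 3) ->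
  forall z, g <= z <= 1 -> Rabs (F z / F 1 - 1) <= eps /\ Rabs (F (- z) / F 1 + 1) <= eps.
Proof.
  intros Heps Hw Hw2 Haw HT z Hz.
  set (al := alpha g h d0 d1) in *.
  set (T := (h - g) / p0 + (1 - h) / (p0 * p1)) in *.
  set (M := w - al * (w * w * w) / 3) in *.
  assert (Hp0 : 0 < p0) by (unfold p0, P0; apply (Pk_pos_lower d0 g); lra).
  assert (Hp1 : 0 < p1) by (unfold p1, P1; apply (Pk_pos_lower d1 h); lra).
  assert (Hwg : w <= g) by nra.
  assert (HM : M <= F w).
  { pose proof (deriv_mono (fun y => F y - (y - al * (y * y * y) / 3)) (fun y => K y - (1 - al * (y * y))) 0 w) as H.
    assert (HD : forall y, 0 <= y <= w -> derivable_pt_lim (fun y => F y - (y - al * (y * y * y) / 3)) y (K y - (1 - al * (y * y)))).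
    { intros y Hy. eapply (dpl_eq (fun y => F y - (y - al / 3 * (y * y * y)))); [intros; cbv beta; field| |].
        2:{ apply dl_minus. apply HFd. apply dl_minus. apply dl_id.
            apply dl_scal with (a := al / 3) (f := fun y => y * y * y).
            apply dl_mul. apply dl_mul; apply dl_id. apply dl_id. }
        fold K. cbv beta. field. }
    assert (HP : forall y, 0 <= y <= w -> 0 <= K y - (1 - al * (y * y))).
    { intros y Hy. assert (1 - al * (y * y) <= K y).
        { unfold K. apply Kf_center. lra. nra. }
        lra. }
    specialize (H ltac:(lra) HD HP). cbv beta in H. rewrite HF0 in H.
    unfold M. lra. }
  assert (HFg : F w <= F g).
  { apply (deriv_mono F K w g). lra. intros; apply HFd.
    intros y Hy. unfold K. apply Kf_nonneg. lra. nra. }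
  assert (Hmid : forall a b, g <= a <= b -> b <= h -> Rabs (F b - F a) <= / p0 * (b - a)).
  { intros a b Ha Hb. apply (deriv_bound F K). lra. intros; apply HFd.
    intros y Hy. unfold K. apply Kf_mid. lra. split; nra. }
  assert (Hfar : forall a b, h <= a <= b -> b <= 1 -> Rabs (F b - F a) <= / (p0 * p1) * (b - a)).
  { intros a b Ha Hb. apply (deriv_bound F K). lra. intros; apply HFd.
    intros y Hy. unfold K. apply Kf_far. lra. split; nra. }
  assert (Hi0 : 0 < / p0) by (apply Rinv_0_lt_compat; lra).
  assert (Hi1 : 0 < / (p0 * p1)) by (apply Rinv_0_lt_compat; nra).
  assert (HTail : forall y, g <= y <= 1 -> Rabs (F 1 - F y) <= T).
  { intros y Hy. unfold T. unfold Rdiv.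
    destruct (Rle_dec y h) as [Hyh|Hyh].
    - assert (A1 := Hmid y h ltac:(lra) ltac:(lra)).
      assert (A2 := Hfar h 1 ltac:(lra) ltac:(lra)).
      replace (F 1 - F y) with ((F 1 - F h) + (F h - F y)) by ring.
      eapply Rle_trans. apply Rabs_triang. nra.
    - assert (A2 := Hfar y 1 ltac:(lra) ltac:(lra)).
      assert (0 <= / p0 * (h - g)) by (apply Rmult_le_pos; lra). nra. }
  assert (HT0 : 0 <= T).
  { unfold T. unfold Rdiv. apply Rplus_le_le_0_compat; apply Rmult_le_pos; lra. }
  assert (HF1g := HTail g ltac:(lra)).
  assert (F g - F 1 <= T).
  { eapply Rle_trans; [apply (Rle_abs (F g - F 1))|]. rewrite <- Rabs_Ropp.
    replace (- (F g - F 1)) with (F 1 - F g) by ring. auto. }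
  assert (HM0 : 0 < M).
  { unfold M. assert (al * (w * w * w) = (al * (w * w)) * w) by ring. nra. }
  assert (HMT : T < M).
  { destruct (Rlt_le_dec T M) as [|Hc]; auto.
    assert (eps * (M - T) <= 0) by nra. nra. }
  assert (HF1 : M - T <= F 1) by lra.
  assert (HF1p : 0 < F 1) by lra.
  assert (Hkey : forall y, g <= y <= 1 -> Rabs (F y / F 1 - 1) <= eps).
  { intros y Hy. replace (F y / F 1 - 1) with (- (F 1 - F y) / F 1) by (field; lra).
    unfold Rdiv. rewrite Rabs_mult, Rabs_Ropp, (Rabs_right (/ F 1)) by (left; apply Rinv_0_lt_compat; lra).
    apply Rmult_le_reg_r with (F 1). lra. rewrite Rmult_assoc, Rinv_l, Rmult_1_r by lra.
    specialize (HTail y Hy). nra. }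
  split. apply Hkey; auto.
  rewrite F_odd by lra. replace (- F z / F 1 + 1) with (- (F z / F 1 - 1)) by (field; lra).
  rewrite Rabs_Ropp. apply Hkey; auto.
Qed.

End Err.

Fixpoint tt (x : R) (n : nat) : R := match n with 0 => 1 | S m => tt x m * x / INR (S m) end.
Fixpoint ts (x : R) (n : nat) : R := match n with 0 => 1 | S m => ts x m + tt x (S m) end.

Lemma tt_eq x n : tt x n = x ^ n / INR (fact n).
Proof.
  induction n. simpl. field. change (tt x (S n)) with (tt x n * x / INR (S n)).
  rewrite IHn, fact_simpl, mult_INR. simpl pow. field.
  split; apply not_0_INR; [apply fact_neq_0|lia].
Qed.

Lemma ts_eq x n : ts x n = tsum x n.
Proof.
  induction n. reflexivity. change (ts x (S n)) with (ts x n + tt x (S n)).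
  change (tsum x (S n)) with (tsum x n + x ^ (S n) / INR (fact (S n))).
  rewrite IHn, tt_eq. auto.
Qed.

Lemma ts_le_exp n x : 0 <= x -> ts x n <= exp x.
Proof. intros; rewrite ts_eq; apply tsum_le_exp; auto. Qed.

Lemma tsum_0 n : tsum 0 n = 1.
Proof.
  induction n. reflexivity.
  change (tsum 0 (S n)) with (tsum 0 n + 0 ^ (S n) / INR (fact (S n))).
  rewrite IHn. simpl. unfold Rdiv. ring.
Qed.

Lemma tsum_deriv_neg n x : derivable_pt_lim (fun y => tsum (- y) (S n)) x (- tsum (- x) n).
Proof.
  assert (H1 : derivable_pt_lim (fun y => - y) x (-1)).
  { eapply dpl_eq; [| |apply derivable_pt_lim_opp, derivable_pt_lim_id].
    intros; unfold opp_fct; auto. auto. }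
  assert (H := derivable_pt_lim_comp (fun y => - y) (fun y => tsum y (S n)) x (-1) _ H1 (tsum_deriv n (- x))).
  eapply dpl_eq; [| |exact H]. intros; unfold comp; auto. ring.
Qed.

Lemma exp_neg_bounds m x : 0 <= x ->
  exp (- x) <= tsum (- x) (2 * m) /\ tsum (- x) (S (2 * m)) <= exp (- x).
Proof.
  revert x; induction m as [|m IH]; intros x Hx.
  - simpl. split.
    + rewrite <- exp_0. apply exp_le_exp. lra.
    + pose proof (exp_ineq1_le (- x)). unfold Rdiv. simpl. lra.
  - assert (HB : forall x, 0 <= x -> exp (- x) <= tsum (- x) (2 * S m)).
    { intros y Hy.
      pose proof (deriv_mono (fun y => tsum (- y) (2 * S m) - exp (- y))
                   (fun y => - tsum (- y) (S (2 * m)) + exp (- y)) 0 y Hy) as H.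
      replace (2 * S m)%nat with (S (S (2 * m))) in * by lia.
      assert (HD : forall z, 0 <= z <= y -> derivable_pt_lim (fun y => tsum (- y) (S (S (2 * m))) - exp (- y)) z
                (- tsum (- z) (S (2 * m)) + exp (- z))).
      { intros z Hz. eapply dpl_eq; [intros; reflexivity| |].
        2:{ apply dl_minus. apply tsum_deriv_neg. apply dl_exp_neg. }
        ring. }
      assert (HP : forall z, 0 <= z <= y -> 0 <= - tsum (- z) (S (2 * m)) + exp (- z)).
      { intros z Hz. destruct (IH z ltac:(lra)). lra. }
      specialize (H HD HP). cbv beta in H. rewrite Ropp_0, tsum_0, exp_0 in H. lra. }
    split. apply HB; auto.
    pose proof (deriv_mono (fun y => exp (- y) - tsum (- y) (S (2 * S m)))
                   (fun y => - exp (- y) + tsum (- y) (2 * S m)) 0 x Hx) as H.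
    assert (HD : forall z, 0 <= z <= x -> derivable_pt_lim (fun y => exp (- y) - tsum (- y) (S (2 * S m))) z
                (- exp (- z) + tsum (- z) (2 * S m))).
    { intros z Hz. eapply dpl_eq; [intros; reflexivity| |].
      2:{ apply dl_minus. apply dl_exp_neg. apply tsum_deriv_neg. }
      ring. }
    assert (HP : forall z, 0 <= z <= x -> 0 <= - exp (- z) + tsum (- z) (2 * S m)).
    { intros z Hz. pose proof (HB z ltac:(lra)). lra. }
    specialize (H HD HP). cbv beta in H. rewrite Ropp_0, tsum_0, exp_0 in H. lra.
Qed.

Lemma exp_ub m x : 0 <= x -> 0 < ts (- x) (S (2 * m)) -> exp x <= / ts (- x) (S (2 * m)).
Proof.
  intros Hx Hp. rewrite ts_eq in *. destruct (exp_neg_bounds m x Hx) as [_ H].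
  rewrite <- (Rinv_inv (exp x)). apply Rinv_le_contravar. auto. rewrite <- exp_Ropp. auto.
Qed.

Lemma ln_le_of_exp y a : 0 < y -> y <= exp a -> ln y <= a.
Proof. intros. rewrite <- (ln_exp a). destruct H0. left; apply ln_increasing; auto. rewrite H0; lra. Qed.
Lemma ln_ge_of_exp y a : exp a <= y -> a <= ln y.
Proof. intros. rewrite <- (ln_exp a). destruct H. left; apply ln_increasing; auto. apply exp_pos. rewrite H; lra. Qed.

Lemma ln_le_x1 x : 0 < x -> ln x <= x - 1.
Proof. intros. apply ln_le_of_exp; auto. pose proof (exp_ineq1_le (x - 1)). lra. Qed.

Lemma e_lb : 2718 / 1000 <= exp 1.
Proof. eapply Rle_trans; [|apply (ts_le_exp 10); lra]. simpl. lra. Qed.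

Lemma ln3_ub : ln 3 <= 10987 / 10000.
Proof. apply ln_le_of_exp. lra. eapply Rle_trans; [|apply (ts_le_exp 12); lra]. simpl. lra. Qed.
Lemma ln2_ub : ln 2 <= 6932 / 10000.
Proof. apply ln_le_of_exp. lra. eapply Rle_trans; [|apply (ts_le_exp 12); lra]. simpl. lra. Qed.
Lemma ln22_ub : ln (22/10) <= 789 / 1000.
Proof. apply ln_le_of_exp. lra. eapply Rle_trans; [|apply (ts_le_exp 12); lra]. simpl. lra. Qed.

Lemma exp1385_ub : exp (1385 / 1000) <= 4.
Proof.
  eapply Rle_trans. apply (exp_ub 4). lra. simpl. lra.
  replace 4 with (/ (1/4)) by field. apply Rinv_le_contravar. lra. simpl. lra.
Qed.

Lemma exp0934_ub : exp (934 / 1000) <= 2546 / 1000.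
Proof.
  eapply Rle_trans. apply (exp_ub 4). lra. simpl. lra.
  replace (2546/1000) with (/ (1000/2546)) by field. apply Rinv_le_contravar. lra. simpl. lra.
Qed.

Lemma PI_bounds : 3135 / 1000 <= PI <= 31421 / 10000.
Proof.
  destruct (PI_2_3_7_ineq 0) as [A _]. destruct (PI_2_3_7_ineq 1) as [_ B].
  simpl in A, B. unfold tg_alt, PI_2_3_7_tg, Ratan_seq in A, B. simpl in A, B. split; lra.
Qed.

Lemma ln_sqrt' x : 0 < x -> ln (sqrt x) = ln x / 2.
Proof.
  intros Hx. assert (0 < sqrt x) by (apply sqrt_lt_R0; auto).
  rewrite <- (sqrt_sqrt x) at 2 by lra. rewrite ln_mult by auto. field.
Qed.

Lemma le_of_ln a b : 0 < a -> 0 < b -> ln a <= ln b -> a <= b.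
Proof. intros. rewrite <- (exp_ln a), <- (exp_ln b) by auto. apply exp_le_exp; auto. Qed.

Lemma ln_mono a b : 0 < a -> a <= b -> ln a <= ln b.
Proof. intros Ha [H|H]. left; apply ln_increasing; auto. subst; lra. Qed.

Lemma le_sqrt_of_sq u v : 0 <= u -> u * u <= v -> u <= sqrt v.
Proof. intros. rewrite <- (sqrt_square u) by auto. apply sqrt_le_1_alt; auto. Qed.

Lemma poly_ineq L s : 1 <= L -> 11768 / 10000 <= s ->
  17661 / 10000 + 2 * s + L / 2 <= 33859 / 10000 * sqrt (L * (1 / 4 + s * s + L / 2)).
Proof.
  intros HL Hs.
  assert (H : (17661 / 10000 + 2 * s + L / 2) / (33859 / 10000) <= sqrt (L * (1 / 4 + s * s + L / 2))).
  { apply le_sqrt_of_sq. apply Rmult_le_pos; lra.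
    set (p := L - 1). set (q := s - 11768 / 10000).
    assert (0 <= p) by (unfold p; lra). assert (0 <= q) by (unfold q; lra).
    replace L with (1 + p) by (unfold p; ring). replace s with (11768 / 10000 + q) by (unfold q; ring).
    assert (0 <= p * q) by nra. assert (0 <= p * p) by nra. assert (0 <= q * q) by nra.
    assert (0 <= p * q * q) by nra. assert (0 <= p * p * p) by nra. assert (0 <= p * p * q) by nra.
    nra. }
  apply Rmult_le_reg_r with (/ (33859 / 10000)). lra.
  replace (33859 / 10000 * sqrt (L * (1 / 4 + s * s + L / 2)) * / (33859 / 10000)) with
    (sqrt (L * (1 / 4 + s * s + L / 2))) by field. exact H.
Qed.

Lemma core eps L t X k : 0 < eps <= 1 -> ln eps = ln (8 / PI) / 2 - L / 2 -> 1 <= L ->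
  1385 / 1000 <= t -> 0 < k <= / t ->
  191 / 100 * sqrt (L * (1 / 4 + t + L / 2)) - 5 / 4 <= X ->
  3 * t * (1 + eps) * sqrt (4 / 3 * (X + k)) <= eps * exp (2 * X).
Proof.
  intros He Hle HL Ht Hk HX.
  set (s := sqrt t).
  assert (Hss : s * s = t) by (apply sqrt_sqrt; lra).
  assert (Hs0 : 0 <= s) by apply sqrt_pos.
  assert (Hs : 11768 / 10000 <= s) by (apply le_sqrt_of_sq; lra).
  assert (HP := poly_ineq L s HL Hs). rewrite Hss in HP.
  set (Q0 := sqrt (L * (1 / 4 + t + L / 2))) in *.
  assert (HQ : 146 / 100 <= Q0).
  { apply le_sqrt_of_sq. lra. assert (2135/1000 <= 1/4 + t + L/2) by lra.
    assert (1 * (1/4 + t + L/2) <= L * (1/4 + t + L/2)) by (apply Rmult_le_compat_r; lra). lra. }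
  assert (HX1 : 1 <= X) by lra.
  assert (Hit : / t <= 1000 / 1385).
  { replace (1000/1385) with (/ (1385/1000)) by field. apply Rinv_le_contravar; lra. }
  assert (Hsq : 0 < sqrt (4 / 3 * (X + k))) by (apply sqrt_lt_R0; lra).
  apply le_of_ln.
  { apply Rmult_lt_0_compat; [|auto]. apply Rmult_lt_0_compat; lra. }
  { apply Rmult_lt_0_compat. lra. apply exp_pos. }
  rewrite !ln_mult by (try apply Rmult_lt_0_compat; try lra; try apply exp_pos; auto).
  rewrite ln_exp, ln_sqrt' by lra. rewrite ln_mult by lra.
  pose proof ln3_ub as B1.
  assert (B2 : ln t <= 2 * (s - 1)).
  { rewrite <- Hss. rewrite ln_mult by lra. pose proof (ln_le_x1 s ltac:(lra)). lra. }
  assert (B3 : ln (1 + eps) <= 6932 / 10000).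
  { apply Rle_trans with (ln 2); [apply ln_mono; lra|apply ln2_ub]. }
  assert (B4 : ln (4 / 3) <= 1 / 3) by (pose proof (ln_le_x1 (4/3) ltac:(lra)); lra).
  assert (B5 : ln (X + k) <= 789 / 1000 + (X + k) / (22 / 10) - 1).
  { replace (X + k) with (22 / 10 * ((X + k) / (22 / 10))) at 1 by field.
    rewrite ln_mult by lra. pose proof ln22_ub. pose proof (ln_le_x1 ((X + k) / (22 / 10)) ltac:(lra)). lra. }
  assert (B6 : 934 / 1000 <= ln (8 / PI)).
  { apply ln_ge_of_exp. eapply Rle_trans; [apply exp0934_ub|].
    destruct PI_bounds as [Hpl Hpi]. apply Rmult_le_reg_r with PI. lra.
    replace (8 / PI * PI) with 8 by (field; lra). lra. }
  rewrite Hle. lra.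
Qed.

Lemma Zceil_ge y : y <= IZR (Defs.Zceil y).
Proof.
  unfold Defs.Zceil, Int_part. rewrite opp_IZR, minus_IZR. destruct (archimed (- y)). lra.
Qed.

Lemma INR_toNat_Zceil y : 0 <= y -> y <= INR (Z.to_nat (Defs.Zceil y)).
Proof.
  intros Hy. pose proof (Zceil_ge y).
  assert (Hz : (0 <= Defs.Zceil y)%Z) by (apply le_IZR; lra).
  rewrite INR_IZR_INZ, Znat.Z2Nat.id by auto. auto.
Qed.

Lemma err_cond g t d0 d1 eps X :
  0 < g <= 1 / 2 -> 1 < t -> t * g < 1 -> exp t = 2 / g ->
  2 / (4 * g) < INR d1 <= 2 / (4 * g) + 1 ->
  X = g * INR d0 -> 1 <= X -> 0 < eps ->
  3 * t * (1 + eps) * sqrt (4 / 3 * (X + (1 / 2 + g) / t)) <= eps * exp (2 * X) ->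
  let h := t * g in
  let al := alpha g h d0 d1 in
  let w := / sqrt al in
  0 < al /\ 0 < w /\ w * w <= 3 / 4 * (g * g) /\ al * (w * w) <= 1 /\
  ((h - g) / P0 g d0 + (1 - h) / (P0 g d0 * P1 h d1)) * (1 + eps) <= eps * (w - al * (w * w * w) / 3).
Proof.
  intros Hg Ht Hh Het Hd1 HX HX1 He Hcore h al w.
  assert (Hd0 : 1 / g <= INR d0).
  { apply Rmult_le_reg_l with g. lra. replace (g * (1 / g)) with 1 by (field; lra). lra. }
  assert (Hh0 : 0 < h) by (unfold h; nra). assert (Hh1 : h < 1) by (unfold h; lra).
  assert (Hal : al = 4 / 3 * (X / (g * g) + INR d1 / h)).
  { unfold al, alpha. rewrite HX. field. lra. }
  assert (Hal0 : 4 / 3 / (g * g) <= al).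
  { rewrite Hal. assert (0 <= INR d1 / h) by (unfold Rdiv; apply Rmult_le_pos; [apply pos_INR|left; apply Rinv_0_lt_compat; lra]).
    assert (1 / (g * g) <= X / (g * g)) by (unfold Rdiv; apply Rmult_le_compat_r; [left; apply Rinv_0_lt_compat; nra|lra]).
    unfold Rdiv in *. lra. }
  assert (Hgg : 0 < 4 / 3 / (g * g)) by (apply Rdiv_lt_0_compat; nra).
  assert (Hal1 : 0 < al) by lra.
  assert (Hsa : 0 < sqrt al) by (apply sqrt_lt_R0; auto).
  assert (Hww : w * w = / al).
  { unfold w. rewrite <- Rinv_mult. rewrite sqrt_sqrt; lra. }
  assert (Hw0 : 0 < w) by (unfold w; apply Rinv_0_lt_compat; auto).
  split; [auto|split; [auto|split; [|split]]].
  - rewrite Hww. replace (3 / 4 * (g * g)) with (/ (4 / 3 / (g * g))) by (field; lra).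
    apply Rinv_le_contravar; auto.
  - rewrite Hww, Rinv_r; lra.
  -
    assert (HM : w - al * (w * w * w) / 3 = 2 / 3 * w).
    { replace (al * (w * w * w)) with (al * (w * w) * w) by ring. rewrite Hww, Rinv_r by lra. field. }
    rewrite HM.
    destruct (Pk_pos_lower d0 g ltac:(lra)) as [HP0 HP0p].
    destruct (Pk_pos_lower d1 h ltac:(lra)) as [HP1 HP1p].
    fold (P0 g d0) in HP0, HP0p. fold (P1 h d1) in HP1, HP1p.
    set (p0 := P0 g d0) in *. set (p1 := P1 h d1) in *.
    assert (Hp1 : 1 / g <= p1).
    { eapply Rle_trans; [|exact HP1].
      assert (t <= 2 * h * INR d1).
      { unfold h. assert (2 / (4 * g) * (2 * t * g) = t) by (field; lra).
        assert (0 <= 2 * t * g) by nra. nra. }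
      assert (exp t <= exp (2 * h * INR d1)) by (apply exp_le_exp; auto).
      rewrite Het in *. unfold Rdiv in *. lra. }
    assert (Hip1 : / p1 <= g).
    { replace g with (/ (1 / g)) by (field; lra). apply Rinv_le_contravar. apply Rdiv_lt_0_compat; lra. auto. }
    assert (HT : (h - g) / p0 + (1 - h) / (p0 * p1) <= h / p0).
    { unfold Rdiv. rewrite Rinv_mult.
      assert (0 < / p0) by (apply Rinv_0_lt_compat; auto).
      assert (0 < / p1) by (apply Rinv_0_lt_compat; auto).
      assert ((1 - h) * (/ p0 * / p1) <= / p0 * g).
      { replace ((1 - h) * (/ p0 * / p1)) with (/ p0 * ((1 - h) * / p1)) by ring.
        apply Rmult_le_compat_l. lra. assert ((1 - h) * / p1 <= 1 * / p1) by (apply Rmult_le_compat_r; lra). lra. }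
      nra. }
    assert (Hp0 : exp (2 * X) / 2 <= p0).
    { rewrite HX. replace (2 * (g * INR d0)) with (2 * g * INR d0) by ring. auto. }
    set (k := (1 / 2 + g) / t) in *.
    assert (Hal2 : al <= 4 / 3 * (X + k) / (g * g)).
    { rewrite Hal. unfold k, h.
      assert (INR d1 / (t * g) <= (1 / 2 + g) / t / (g * g)).
      { apply Rmult_le_reg_r with (t * g * g). nra.
        replace (INR d1 / (t * g) * (t * g * g)) with (INR d1 * g) by (field; lra).
        replace ((1 / 2 + g) / t / (g * g) * (t * g * g)) with (1/2 + g) by (field; lra).
        assert (Hq : INR d1 <= 1 / (2 * g) + 1) by (replace (1 / (2 * g)) with (2 / (4 * g)) by (field; lra); lra).
        apply Rmult_le_compat_r with (r := g) in Hq; [|lra].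
        replace ((1 / (2 * g) + 1) * g) with (1 / 2 + g) in Hq by (field; lra). lra. }
      unfold Rdiv in *. nra. }
    assert (HXk : 0 < X + k) by (unfold k; assert (0 < (1 / 2 + g) / t) by (apply Rdiv_lt_0_compat; lra); lra).
    assert (Hsal : sqrt al <= sqrt (4 / 3 * (X + k)) / g).
    { replace (sqrt (4 / 3 * (X + k)) / g) with (sqrt (4 / 3 * (X + k) / (g * g))).
      apply sqrt_le_1_alt; auto.
      rewrite sqrt_div_alt by nra. rewrite sqrt_square by lra. auto. }
    assert (0 < exp (2 * X)) by apply exp_pos.
    apply Rle_trans with (h / p0 * (1 + eps)).
    { apply Rmult_le_compat_r; lra. }
    assert (Hsq : 0 < sqrt (4 / 3 * (X + k))) by (apply sqrt_lt_R0; lra).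
    assert (E1 : h / p0 * (1 + eps) <= 2 * h * (1 + eps) / exp (2 * X)).
    { unfold Rdiv. replace (2 * h * (1 + eps) * / exp (2 * X)) with (h * (1 + eps) * / (exp (2 * X) / 2)) by (field; lra).
      replace (h * / p0 * (1 + eps)) with (h * (1 + eps) * / p0) by ring.
      apply Rmult_le_compat_l. nra. apply Rinv_le_contravar. lra. auto. }
    eapply Rle_trans; [exact E1|].
    unfold w. 
    apply Rmult_le_reg_r with (exp (2 * X) * sqrt al * 3 / 2).
    { apply Rmult_lt_0_compat; [|lra]. nra. }
    replace (2 * h * (1 + eps) / exp (2 * X) * (exp (2 * X) * sqrt al * 3 / 2)) with (3 * h * (1 + eps) * sqrt al) by (field; lra).
    replace (eps * (2 / 3 * / sqrt al) * (exp (2 * X) * sqrt al * 3 / 2)) with (eps * exp (2 * X)) by (field; lra).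
    eapply Rle_trans; [|exact Hcore].
    unfold h. replace (3 * (t * g) * (1 + eps) * sqrt al) with (3 * t * (1 + eps) * (g * sqrt al)) by ring.
    apply Rmult_le_compat_l. nra.
    apply Rmult_le_reg_r with (/ g). apply Rinv_0_lt_compat; lra.
    replace (g * sqrt al * / g) with (sqrt al) by (field; lra). exact Hsal.
Qed.

Lemma sign_neg y : y < 0 -> sign y = -1.
Proof. intros; unfold sign; destruct (Rlt_dec y 0); [auto|lra]. Qed.
Lemma sign_pos y : 0 < y -> sign y = 1.
Proof. intros; unfold sign; destruct (Rlt_dec y 0); [lra|]. destruct (Rgt_dec y 0); [auto|lra]. Qed.

Lemma sq_inj a b : 0 <= a -> 0 <= b -> a * a = b * b -> a = b.
Proof. intros. nra. Qed.

Theorem corollary2 (s eps Delta : R)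
  (Heps : 0 < eps <= 2 * sqrt (2 / (exp 1 * PI)))
  (HDelta : 0 < Delta <= 2) :
  exists c : list R,
    (length c <= S (deg_bound eps Delta))%nat /\
    forall x : R,
      ((-1 <= x <= s - Delta / 2) \/ (s + Delta / 2 <= x <= 1)) ->
      Rabs (peval c x - sign (x - s)) <= eps.
Proof.
  destruct (Rle_dec 1 s) as [Hs1|Hs1].
  { exists (-1 :: nil). split. simpl; lia. intros x Hx.
    rewrite sign_neg by (destruct Hx; lra). simpl.
    replace (-1 + x * 0 - -1) with 0 by ring. rewrite Rabs_R0. lra. }
  destruct (Rle_dec s (-1)) as [Hs2|Hs2].
  { exists (1 :: nil). split. simpl; lia. intros x Hx.
    rewrite sign_pos by (destruct Hx; lra). simpl.
    replace (1 + x * 0 - 1) with 0 by ring. rewrite Rabs_R0. lra. }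
  destruct PI_bounds as [Hpi1 Hpi2]. pose proof e_lb as He.
  set (Lv := L eps).
  set (N := deg_bound eps Delta).
  assert (Hsq2e : 0 < 2 / (exp 1 * PI)) by (apply Rdiv_lt_0_compat; [lra|apply Rmult_lt_0_compat; lra]).
  assert (Heps2 : eps * eps <= 4 * (2 / (exp 1 * PI))).
  { pose proof (sqrt_sqrt (2 / (exp 1 * PI)) ltac:(lra)). pose proof (sqrt_pos (2 / (exp 1 * PI))). nra. }
  assert (Heps3 : exp 1 * PI * (eps * eps) <= 8).
  { apply Rmult_le_compat_l with (r := exp 1 * PI) in Heps2; [|nra].
    replace (exp 1 * PI * (4 * (2 / (exp 1 * PI)))) with 8 in Heps2 by (field; lra). lra. }
  assert (HL : 1 <= Lv).
  { unfold Lv, L. apply ln_ge_of_exp. simpl. apply Rmult_le_reg_r with (PI * (eps * (eps * 1))). nra.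
    replace (8 / (PI * (eps * (eps * 1))) * (PI * (eps * (eps * 1)))) with 8 by (field; split; lra). nra. }
  assert (He1 : eps <= 1).
  { assert (852 / 100 <= exp 1 * PI) by nra.
    assert (852 / 100 * (eps * eps) <= 8) by nra. nra. }
  assert (Hlne : ln eps = ln (8 / PI) / 2 - Lv / 2).
  { unfold Lv, L. replace (8 / (PI * eps ^ 2)) with (8 / PI * / (eps ^ 2)) by (field; lra).
    assert (0 < 8 / PI) by (apply Rdiv_lt_0_compat; lra).
    assert (0 < eps ^ 2) by (apply pow_lt; lra).
    assert (0 < / eps ^ 2) by (apply Rinv_0_lt_compat; lra).
    rewrite ln_mult by auto. rewrite ln_Rinv by auto. rewrite ln_pow by lra. simpl INR. lra. }
  set (g := Delta / 4).
  set (t := ln (8 / Delta)).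
  assert (Het : exp t = 2 / g) by (unfold t, g; rewrite exp_ln by (apply Rdiv_lt_0_compat; lra); field; lra).
  assert (Ht : 1385 / 1000 <= t).
  { unfold t. apply ln_ge_of_exp. eapply Rle_trans; [apply exp1385_ub|].
    apply Rmult_le_reg_r with Delta. lra. replace (8 / Delta * Delta) with 8 by (field; lra). lra. }
  assert (Htg : t * g < 1).
  { assert (Hl : t <= 6932 / 10000 + (8 / Delta) / 2 - 1).
    { unfold t. replace (8 / Delta) with (2 * ((8 / Delta) / 2)) at 1 by (field; lra).
      assert (H8 : 0 < 8 / Delta / 2) by (apply Rdiv_lt_0_compat; [apply Rdiv_lt_0_compat|]; lra).
      rewrite ln_mult by lra.
      pose proof ln2_ub. pose proof (ln_le_x1 ((8 / Delta) / 2) H8). lra. }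
    unfold g. apply Rmult_le_compat_r with (r := Delta / 4) in Hl; [|lra].
    replace ((6932 / 10000 + 8 / Delta / 2 - 1) * (Delta / 4)) with (1 - 3068 / 40000 * Delta) in Hl by (field; lra).
    lra. }
  set (Bv := 64 * (sqrt 2 / Delta) * sqrt Lv / (3 * sqrt PI * eps)).
  set (E := exp (Lv / 2)).
  assert (HE0 : 0 < E) by apply exp_pos.
  assert (HEE : E * E = 8 / (PI * eps ^ 2)).
  { unfold E. rewrite <- exp_plus. replace (Lv / 2 + Lv / 2) with Lv by field. unfold Lv, L.
    apply exp_ln. apply Rdiv_lt_0_compat. lra. apply Rmult_lt_0_compat. lra. apply pow_lt; lra. }
  assert (Hsq2 : 0 < sqrt 2) by (apply sqrt_lt_R0; lra).
  assert (Hspi : 0 < sqrt PI) by (apply sqrt_lt_R0; lra).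
  assert (HepE : sqrt PI * eps * E = 2 * sqrt 2).
  { apply sq_inj. apply Rmult_le_pos; [apply Rmult_le_pos|]; lra. lra.
    replace (sqrt PI * eps * E * (sqrt PI * eps * E)) with ((sqrt PI * sqrt PI) * (eps * eps) * (E * E)) by ring.
    rewrite HEE, sqrt_sqrt by lra. replace (2 * sqrt 2 * (2 * sqrt 2)) with (4 * (sqrt 2 * sqrt 2)) by ring.
    rewrite sqrt_sqrt by lra. simpl. field. lra. }
  assert (HBv : Bv = 4 / 3 * (8 / Delta) * sqrt Lv * E).
  { unfold Bv. replace (3 * sqrt PI * eps) with (3 * (2 * sqrt 2) / E).
    field. repeat split; lra.
    rewrite <- HepE. field. lra. }
  assert (HsL : 1 <= sqrt Lv) by (apply le_sqrt_of_sq; lra).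
  assert (HlnB : 1 / 4 + t + Lv / 2 <= ln Bv).
  { assert (HD8 : 0 < 8 / Delta) by (apply Rdiv_lt_0_compat; lra).
    assert (P1 : 0 < 4 / 3 * (8 / Delta)) by (apply Rmult_lt_0_compat; lra).
    assert (P2 : 0 < 4 / 3 * (8 / Delta) * sqrt Lv) by (apply Rmult_lt_0_compat; lra).
    rewrite HBv. rewrite ln_mult by lra. rewrite ln_mult by lra. rewrite ln_mult by lra.
    unfold E. rewrite ln_exp. fold t.
    assert (ln (4 / 3) >= 1 / 4).
    { replace (4 / 3) with (/ (3 / 4)) by field. rewrite ln_Rinv by lra.
      pose proof (ln_le_x1 (3/4) ltac:(lra)). lra. }
    assert (0 <= ln (sqrt Lv)) by (apply ln_ge_of_exp; rewrite exp_0; lra).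
    lra. }
  set (lnB := ln Bv) in *.
  assert (HlnB0 : 0 < lnB) by lra.
  set (Av := IZR (Defs.Zceil (4 / Delta ^ 2 * Lv * exp 1 ^ 2))).
  assert (HA : 4 / Delta ^ 2 * Lv * exp 1 ^ 2 <= Av) by apply Zceil_ge.
  set (Q := sqrt (Lv * lnB)).
  assert (HQ0 : 0 <= Q) by apply sqrt_pos.
  set (U := 4 * sqrt 2 * exp 1 / Delta * Q).
  assert (HU0 : 0 <= U).
  { unfold U. apply Rmult_le_pos; auto. unfold Rdiv. apply Rmult_le_pos. nra. left; apply Rinv_0_lt_compat; lra. }
  assert (HU : U <= sqrt (8 * Av * lnB)).
  { apply le_sqrt_of_sq; auto.
    assert (Hs22 : sqrt 2 * sqrt 2 = 2) by (apply sqrt_sqrt; lra).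
    assert (HQQ : Q * Q = Lv * lnB) by (apply sqrt_sqrt; nra).
    assert (HUU : U * U = 8 * (4 / Delta ^ 2 * Lv * exp 1 ^ 2) * lnB).
    { unfold U. replace (4 * sqrt 2 * exp 1 / Delta * Q * (4 * sqrt 2 * exp 1 / Delta * Q)) with
        (16 * (sqrt 2 * sqrt 2) * (exp 1 * exp 1) / (Delta * Delta) * (Q * Q)) by (field; lra).
      rewrite Hs22, HQQ. field. lra. }
    rewrite HUU. apply Rmult_le_compat_r. lra. lra. }
  assert (HN : sqrt (8 * Av * lnB) + 1 <= INR N).
  { unfold N, deg_bound. apply INR_toNat_Zceil. match goal with |- 0 <= sqrt ?a + 1 => pose proof (sqrt_pos a); lra end. }
  set (d1 := Z.to_nat (up (2 / Delta))).
  assert (Hd1 : 2 / (4 * g) < INR d1 <= 2 / (4 * g) + 1).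
  { replace (4 * g) with Delta by (unfold g; field).
    destruct (archimed (2 / Delta)) as [A1 A2].
    assert (0 < 2 / Delta) by (apply Rdiv_lt_0_compat; lra).
    assert (Hz : (0 <= up (2 / Delta))%Z) by (apply le_IZR; lra).
    unfold d1. rewrite INR_IZR_INZ, Znat.Z2Nat.id by auto. lra. }
  set (m := Nat.div2 (pred N)).
  assert (HNpos : (1 <= N)%nat).
  { apply INR_le. simpl. pose proof (sqrt_pos (8 * Av * lnB)). lra. }
  assert (Hm : INR N - 2 <= 2 * INR m).
  { pose proof (Nat.div2_odd (pred N)) as Hodd. fold m in Hodd.
    assert (Hb : (Nat.b2n (Nat.odd (pred N)) <= 1)%nat) by (destruct (Nat.odd (pred N)); simpl; lia).
    assert (HNm : (N <= 2 * m + 2)%nat) by lia.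
    apply le_INR in HNm. rewrite plus_INR, mult_INR in HNm. simpl in HNm. lra. }
  assert (Hm2 : (2 * m + 1 <= N)%nat).
  { pose proof (Nat.div2_odd (pred N)) as Hodd. fold m in Hodd. lia. }
  set (Q0 := sqrt (Lv * (1 / 4 + t + Lv / 2))).
  assert (HQQ0 : Q0 <= Q) by (apply sqrt_le_1_alt; apply Rmult_le_compat_l; lra).
  assert (HQ0b : 146 / 100 <= Q0).
  { apply le_sqrt_of_sq. lra. assert (2135/1000 <= 1/4 + t + Lv/2) by lra.
    assert (1 * (1/4 + t + Lv/2) <= Lv * (1/4 + t + Lv/2)) by (apply Rmult_le_compat_r; lra). lra. }
  assert (Hce : 191 / 100 <= sqrt 2 * exp 1 / 2).
  { assert (1414 / 1000 <= sqrt 2) by (apply le_sqrt_of_sq; lra). nra. }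
  assert (HUQ : U * Delta / 8 = sqrt 2 * exp 1 / 2 * Q) by (unfold U; field; lra).
  assert (HR0 : 191 / 100 * Q0 - 5 / 4 <= g * (INR m - INR d1)).
  { unfold g.
    assert (g * (INR m - INR d1) >= (INR N - 2) * Delta / 8 - 1 / 2 - Delta / 4).
    { unfold g. replace (2 / (4 * g)) with (2 / Delta) in Hd1 by (unfold g; field; lra).
      assert (INR d1 <= 2 / Delta + 1) by lra.
      assert (Delta / 4 * INR d1 <= Delta / 4 * (2 / Delta + 1)) by (apply Rmult_le_compat_l; lra).
      replace (Delta / 4 * (2 / Delta + 1)) with (1 / 2 + Delta / 4) in H0 by (field; lra).
      assert (Delta / 4 * (INR N - 2) <= Delta / 4 * (2 * INR m)) by (apply Rmult_le_compat_l; lra).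
      unfold g. nra. }
    unfold g in H.
    assert ((U - 1) * Delta / 8 <= (INR N - 2) * Delta / 8).
    { unfold Rdiv. apply Rmult_le_compat_r. lra. apply Rmult_le_compat_r; lra. }
    assert (sqrt 2 * exp 1 / 2 * Q >= 191 / 100 * Q0) by nra.
    nra. }
  assert (Hg0 : 0 < g <= 1 / 2) by (unfold g; lra).
  assert (Hmd : (d1 < m)%nat).
  { apply INR_lt. assert (0 < g * (INR m - INR d1)) by lra.
    assert (0 < INR m - INR d1) by (apply Rmult_lt_reg_l with g; lra). lra. }
  set (d0 := (m - d1)%nat).
  assert (Hd0 : INR d0 = INR m - INR d1) by (unfold d0; apply minus_INR; lia).
  set (X := g * INR d0).
  assert (HX : 191 / 100 * Q0 - 5 / 4 <= X) by (unfold X; rewrite Hd0; lra).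
  set (k := (1 / 2 + g) / t).
  assert (Hk : 0 < k <= / t).
  { unfold k. split. apply Rdiv_lt_0_compat; lra. unfold Rdiv.
    replace (/ t) with (1 * / t) at 2 by ring. apply Rmult_le_compat_r. left; apply Rinv_0_lt_compat; lra. lra. }
  assert (Hcore := core eps Lv t X k ltac:(lra) Hlne HL Ht Hk HX).
  assert (HX1 : 1 <= X) by lra.
  assert (Hd1' : 2 / (4 * g) < INR d1 <= 2 / (4 * g) + 1) by exact Hd1.
  destruct (err_cond g t d0 d1 eps X Hg0 ltac:(lra) Htg Het Hd1' eq_refl HX1 ltac:(lra) Hcore)
    as [Hal [Hw0 [Hww [Haw HT]]]].
  set (h := t * g) in *.
  set (w := / sqrt (alpha g h d0 d1)) in *.
  assert (Hgh : (0 < g < h) /\ h < 1).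
  { split; [split; [lra| unfold h; nra] | exact Htg]. }
  destruct (IsPoly_prim _ _ (IsPoly_Kf g h d0 d1)) as [F [HFp [HF0 HFd]]].
  assert (Herr := main_err g h d0 d1 Hgh F HF0 HFd eps w ltac:(lra) Hw0 Hww Haw HT).
  assert (Hpoly : IsPoly (fun x => / F 1 * F ((x - s) / 2)) (S (2 * d0 + 2 * d1) * 1)).
  { apply IsPoly_scal. apply IsPoly_comp; auto.
    eapply IsPoly_ext with (f := fun x => - s / 2 + 1 / 2 * x). intros; field.
    apply IsPoly_add. apply IsPoly_const. apply IsPoly_scal. apply IsPoly_id. }
  destruct Hpoly as [c [Hlen Hc]].
  exists c. split.
  { assert (d0 + d1 = m)%nat by (unfold d0; lia). lia. }
  intros x Hx. rewrite Hc.
  destruct Hx as [Hx|Hx].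
  - rewrite sign_neg by lra.
    set (z := - ((x - s) / 2)).
    assert (Hz : g <= z <= 1) by (unfold z, g; lra).
    destruct (Herr z Hz) as [_ H2].
    replace (- z) with ((x - s) / 2) in H2 by (unfold z; ring).
    replace (/ F 1 * F ((x - s) / 2) - -1) with (F ((x - s) / 2) / F 1 + 1) by (unfold Rdiv; ring).
    exact H2.
  - rewrite sign_pos by lra.
    assert (Hz : g <= (x - s) / 2 <= 1) by (unfold g; lra).
    destruct (Herr _ Hz) as [H1 _].
    replace (/ F 1 * F ((x - s) / 2) - 1) with (F ((x - s) / 2) / F 1 - 1) by (unfold Rdiv; ring).
    exact H1.
Qed.
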